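(* Let $K$ be a field of characteristic zero, $n\ge1$. Let $\mathcal L$ be the set of $n\times n$ matrices $B$ over $K$ of the form: for $1\le k\le n$ and $0\le i\le k-1$, the entry in row $i-k+n+1$ and column $k$ equals $b_{k,i}$, all entries above these positions (i.e. entries in row $a$, column $k$ with $a< n-k+1$) are $0$, and $b_{k,0}\ne 0$ for all $1\le k\le n$ (so $B$ is zero above the antidiagonal, with nonzero antidiagonal entries $b_{1,0},\dots,b_{n,0}$). Let $s_{k,i}$ be the coordinate function on $\mathcal L$ with $s_{k,i}(B)=b_{k,i}$; these are algebraically independent and $K(\mathcal L)=K(s_{k,i}:1\le k\le n,0\le i\le k-1)$. Order the $s_{k,i}$ as $$s_{1,0}<s_{2,0}<\dots<s_{n,0}<s_{2,1}<s_{3,2}<s_{3,1}<s_{4,3}<s_{4,2}<s_{4,1}<\dots<s_{n,n-1}<s_{n,n-2}<\dots<s_{n,1},$$ i.e. all $s_{k,0}$ first in increasing $k$, then for $k=2,\dots,n$ in turn the functions $s_{k,k-1},s_{k,k-2},\dots,s_{k,1}$. Let $\pi(J_{k,i})$ denote the restriction to $\mathcal L$ of the polynomial $J_{k,i}$ (defined in the context), regarded as an element of $K(\mathcal L)$. Then for every pair $(k,i)$ with $1\le k\le n$, $0\le i\le k-1$ there exist rational functions $\phi_{k,i}\neq 0$ and $\psi_{k,i}$ in the coordinate functions $s_{a,b}$ that are strictly smaller than $s_{k,i}$ in this order, such that $$\pi(J_{k,i})=\phi_{k,i}\,s_{k,i}+\psi_{k,i}.$$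
   Context: Let $M=\mathrm{Mat}(n,K)$ with standard coordinate functions $\{x_{ij}\}$, generic matrix $X=(x_{ij})$ and adjugate matrix $X^*=(x^*_{ij})$, $XX^*=X^*X=\det X\cdot E$. For $1\le k\le n$ and $0\le i\le k-1$, $J_{k,i}$ is the determinant of the $k\times k$ matrix whose first $k-i$ rows are the rows $n-k+i+1,\dots,n$ of $X$ restricted to columns $1,\dots,k$, and whose last $i$ rows are the rows $n-i+1,\dots,n$ of $X^*$ restricted to columns $1,\dots,k$. Note that on $\mathcal L$ the coordinate $x_{a,b}$ restricts to $s_{k,i}$ when $a=i-k+n+1$, $b=k$. *)

(* Defs.v *)
From HB Require Import structures.
From mathcomp Require Import all_boot all_order all_algebra.
From mathcomp Require Import mpoly.
Set Implicit Arguments. Unset Strict Implicit. Unset Printing Implicit Defensive.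
Import GRing.Theory.
Local Open Scope ring_scope.

Notation "x %:F" := (@FracField.tofrac _ x).

(* Number of coordinate functions s_{k,i} (1<=k<=n, 0<=i<=k-1). *)
Definition nvars (n : nat) : nat := (n * n.+1) %/ 2.

(* Position (0-based) of s_{k,i} in the order
   s_{1,0}<...<s_{n,0}<s_{2,1}<s_{3,2}<s_{3,1}<...<s_{n,n-1}<...<s_{n,1}. *)
Definition sidx (n k i : nat) : nat :=
  if i == 0%N then k.-1 else (n + (k.-1 * k.-2) %/ 2 + (k.-1 - i))%N.

(* The coordinate function s_{k,i}, as a variable of the polynomial ring
   K[s_{k,i}], whose fraction field is K(L). Variable number t is the
   t-th coordinate function in the order above. *)
Definition s_var (K : fieldType) (n k i : nat) : {mpoly K[nvars n]} :=
  if insub (sidx n k i) is Some j then 'X_j else 0.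

(* Entry (a, b) (0-indexed naturals) of a square matrix; 0 if out of range
   (never used out of range below). *)
Definition mxe (R : nmodType) (n : nat) (M : 'M[R]_n) (a b : nat) : R :=
  match insub a, insub b with Some a', Some b' => M a' b' | _, _ => 0 end.

Definition genX (K : fieldType) (n : nat) : 'M[{mpoly K[n * n]}]_n :=
  \matrix_(a < n, b < n) 'X_(mxvec_index a b).

(* J_{k,i} (k, i as in the paper, rows/columns 0-indexed internally):
   first k-i rows are rows n-k+i+1..n of X (1-indexed), last i rows are
   rows n-i+1..n of X^* = adj X, restricted to columns 1..k. *)
Definition Jpoly (K : fieldType) (n k i : nat) : {mpoly K[n * n]} :=
  \det (\matrix_(r < k, c < k)
          if (r < k - i)%N
          then mxe (genX K n) (n - k + i + r) c
          else mxe (\adj (genX K n)) (n - k + r) c).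

(* Restriction to L: x_{a,b} (1-indexed) |-> s_{b, a-n+b-1} if a >= n-b+1,
   and 0 otherwise.  With 0-indexed a0, b0: nonzero iff a0 + b0 >= n-1,
   and then it is s_{b0+1, a0+b0+1-n}. *)
Definition restr_mx (K : fieldType) (n : nat) : 'M[{mpoly K[nvars n]}]_n :=
  \matrix_(a < n, b < n)
     if (n.-1 <= a + b)%N then s_var K n b.+1 ((a + b).+1 - n) else 0.

Definition restr_tuple (K : fieldType) (n : nat) :
    (n * n).-tuple {mpoly K[nvars n]} :=
  [tuple mxvec (restr_mx K n) 0 j | j < n * n].

Definition piL (K : fieldType) (n : nat) (p : {mpoly K[n * n]}) :
    {mpoly K[nvars n]} := p \mPo (restr_tuple K n).

Definition vars_below (K : fieldType) (N t : nat) (p : {mpoly K[N]}) : Prop :=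
  forall m, m \in msupp p -> forall j : 'I_N, (t <= j)%N -> m j = 0%N.

Definition rat_below (K : fieldType) (N t : nat)
    (f : {fraction {mpoly K[N]}}) : Prop :=
  exists p q : {mpoly K[N]},
    [/\ vars_below t p, vars_below t q, q != 0 & f = p%:F / q%:F].

(* Main.v *)
Require Import Defs.
From HB Require Import structures.
From mathcomp Require Import all_boot all_order all_algebra all_fingroup.
From mathcomp Require Import mpoly.
From mathcomp Require Import zify ring.
Set Implicit Arguments. Unset Strict Implicit. Unset Printing Implicit Defensive.
Import GRing.Theory.
Local Open Scope ring_scope.

Definition Tn (m : nat) : nat := (m.-1 * m.-2) %/ 2.

Lemma TnS m : Tn m.+1 = (Tn m + m.-1)%N.
Proof.
rewrite /Tn /=. case: m => [|m] //=.
have -> : (m.+1 * m = m * 2 + m * m.-1)%N.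
  case: m => [|m] //=; nia.
by rewrite divnMDl // addnC.
Qed.

Lemma Tn_mono m m' : (m < m')%N -> (Tn m + m.-1 <= Tn m')%N.
Proof.
elim: m' => [//|m' IH]; rewrite ltnS leq_eqVlt => /orP [/eqP -> | h].
  by rewrite TnS.
rewrite TnS; have := IH h; lia.
Qed.

Lemma nvarsE n : nvars n = (n + Tn n.+1)%N.
Proof.
rewrite /nvars /Tn /=.
have -> : (n * n.+1 = n * 2 + n * n.-1)%N by case: n => [|n] //=; nia.
by rewrite divnMDl.
Qed.

Lemma sidxE n m j : (0 < j)%N -> sidx n m j = (n + Tn m + (m.-1 - j))%N.
Proof. by rewrite /sidx; case: j. Qed.

Lemma sidx0 n m : sidx n m 0 = m.-1.
Proof. by []. Qed.

Lemma sidx_lt n m j : (1 <= m <= n)%N -> (j < m)%N -> (sidx n m j < nvars n)%N.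
Proof.
move=> /andP[h1 h2] hj; rewrite nvarsE; case: j hj => [|j] hj.
  rewrite sidx0; lia.
rewrite sidxE //.
have := (@Tn_mono m n.+1 ltac:(lia)). lia.
Qed.

Lemma sidx_inj n m m' j j' : (1 <= m <= n)%N -> (1 <= m' <= n)%N ->
  (j < m)%N -> (j' < m')%N -> sidx n m j = sidx n m' j' -> j = j'.
Proof.
move=> /andP[h1 h2] /andP[h1' h2'] hj hj'.
case: j hj => [|j] hj; case: j' hj' => [|j'] hj'; rewrite ?sidx0 ?sidxE //.
- lia.
- lia.
case: (ltngtP m m') => hm.
- have := Tn_mono hm; lia.
- have := Tn_mono hm; lia.
- subst; lia.
Qed.

Lemma sidx_ltA n m j k i : (k <= n)%N -> (1 <= i)%N -> (i < k)%N -> (m < k)%N -> (j < m)%N ->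
  (sidx n m j < sidx n k i)%N.
Proof.
move=> hkn hi hik hmk hjm; rewrite (sidxE _ _ hi).
case: j hjm => [|j] hjm; rewrite ?sidx0 ?sidxE //.
- lia.
- have := Tn_mono hmk; lia.
Qed.

Lemma sidx_ltB n k i j : (1 <= i)%N -> (i < j)%N -> (j < k)%N ->
  (sidx n k j < sidx n k i)%N.
Proof. move=> hi hij hjk; rewrite !sidxE //; lia. Qed.

Lemma sidx_ltC n m k i : (1 <= i)%N -> (0 < m <= n)%N -> (sidx n m 0 < sidx n k i)%N.
Proof. move=> hi hm; rewrite sidx0 sidxE //; lia. Qed.

Lemma sidx_lt_gen n m j k i : (k <= n)%N -> (1 <= i)%N -> (i < k)%N -> (m <= k)%N ->
  (j < m)%N -> (m = k -> i < j)%N -> (sidx n m j < sidx n k i)%N.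
Proof.
move=> hkn hi hik hmk hjm he; case: (ltngtP m k) => h.
- exact: sidx_ltA.
- lia.
- subst; apply: sidx_ltB => //; exact: he.
Qed.

Section VB.
Variables (K : fieldType) (N t : nat).

Definition vbb (p : {mpoly K[N]}) : bool :=
  all (fun m : 'X_{1..N} => [forall j : 'I_N, (t <= j)%N ==> (m j == 0%N)]) (msupp p).

Lemma vbbP p : reflect (vars_below t p) (vbb p).
Proof.
apply: (iffP allP) => [h m /h /forallP hm j hj| h m /h hm].
  by have /implyP/(_ hj)/eqP := hm j.
by apply/forallP => j; apply/implyP => hj; rewrite (hm j hj).
Qed.

Definition vbq : qualifier 0 {mpoly K[N]} := [qualify p | vbb p].

Lemma vbq_subring : subring_closed vbq.
Proof.
split.
- rewrite qualifE; apply/allP => m; rewrite msupp1 inE => /eqP ->.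
  by apply/forallP => j; rewrite mnm0E implybT.
- move=> p q; rewrite !qualifE => /allP hp /allP hq; apply/allP => m.
  move/msuppB_le; rewrite mem_cat => /orP [/hp|/hq] //.
- move=> p q; rewrite !qualifE => /allP hp /allP hq; apply/allP => m.
  move/msuppM_le => /allpairsP [[m1 m2] /= [h1 h2 ->]].
  have /forallP e1 := hp _ h1; have /forallP e2 := hq _ h2.
  apply/forallP => j; apply/implyP => hj; rewrite mnmDE.
  by have /implyP/(_ hj)/eqP -> := e1 j; have /implyP/(_ hj)/eqP -> := e2 j.
Qed.

HB.instance Definition _ := GRing.isSubringClosed.Build _ vbb vbq_subring.

Lemma vbqX (j : 'I_N) : (j < t)%N -> ('X_j : {mpoly K[N]}) \is vbq.
Proof.
move=> hj; rewrite qualifE; apply/allP => m; rewrite msuppX inE => /eqP ->.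
apply/forallP => l; apply/implyP => hl; rewrite mnm1E.
have : j != l by apply/eqP => e; rewrite e in hj; lia.
by move/negbTE => ->.
Qed.

Lemma vbq_det m (A : 'M[{mpoly K[N]}]_m) :
  (forall i j, A i j \is vbq) -> \det A \is vbq.
Proof.
move=> h; rewrite /determinant; apply: rpred_sum => s _.
by apply: rpredM; [apply: rpred_sign | apply: rpred_prod => i _; apply: h].
Qed.

Lemma vbq_vars p : p \is vbq -> vars_below t p.
Proof. by rewrite qualifE => /vbbP. Qed.

End VB.

Definition revp m : 'S_m := perm (@rev_ord_inj m).

Lemma det_col_rev (R : comRingType) m (M : 'M[R]_m) :
  \det M = \det (col_perm (revp m) M) * (-1) ^+ odd_perm (revp m)^-1.
Proof.
by rewrite col_permE det_mulmx det_perm -mulrA -expr2 sqrr_sign mulr1.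
Qed.

Lemma det_antiL (R : comRingType) m (M : 'M[R]_m) :
  (forall r c : 'I_m, (r + c < m.-1)%N -> M r c = 0) ->
  \det M = (-1) ^+ odd_perm (revp m)^-1 * \prod_r M r (rev_ord r).
Proof.
move=> h; rewrite det_col_rev mulrC det_trig.
  by congr (_ * _); apply: eq_bigr => r _; rewrite mxE permE.
apply/is_trig_mxP => r c hrc; rewrite mxE permE; apply: h => /=.
have := ltn_ord c; lia.
Qed.

Lemma det_antiU (R : comRingType) m (M : 'M[R]_m) :
  (forall r c : 'I_m, (m <= r + c)%N -> M r c = 0) ->
  \det M = (-1) ^+ odd_perm (revp m)^-1 * \prod_r M r (rev_ord r).
Proof.
move=> h; rewrite det_col_rev mulrC -det_tr det_trig.
  by congr (_ * _); apply: eq_bigr => r _; rewrite !mxE permE.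
apply/is_trig_mxP => r c hrc; rewrite !mxE permE; apply: h => /=.
have := ltn_ord c; have := ltn_ord r; lia.
Qed.

Lemma det_col_perm (R : comRingType) m (s : 'S_m) (M : 'M[R]_m) :
  \det M = \det (col_perm s M) * (-1) ^+ odd_perm s^-1.
Proof.
by rewrite col_permE det_mulmx det_perm -mulrA -expr2 sqrr_sign mulr1.
Qed.

Lemma mxe_ord (R : nmodType) n (M : 'M[R]_n) (a b : 'I_n) : mxe M a b = M a b.
Proof. by rewrite /mxe !valK. Qed.

Lemma mxe_nat (R : nmodType) n (M : 'M[R]_n) a b (ha : (a < n)%N) (hb : (b < n)%N) :
  mxe M a b = M (Ordinal ha) (Ordinal hb).
Proof. by rewrite -mxe_ord. Qed.

Section Spec.
Variables (K : fieldType) (n : nat).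
Local Notation R := {mpoly K[nvars n]}.

Lemma X_neq0 N (j : 'I_N) : ('X_j : {mpoly K[N]}) != 0.
Proof.
apply/eqP => h; have := @mcoeffXU N K j j; rewrite h mcoeff0 eqxx => /eqP.
by rewrite eq_sym oner_eq0.
Qed.

Lemma s_varE m j (h : (sidx n m j < nvars n)%N) :
  s_var K n m j = 'X_(Ordinal h).
Proof. by rewrite /s_var insubT. Qed.

Lemma s_var_neq0 m j : (1 <= m <= n)%N -> (j < m)%N -> s_var K n m j != 0.
Proof. by move=> hm hj; rewrite (s_varE (sidx_lt hm hj)) X_neq0. Qed.

Lemma s_var_vbq t m j : (sidx n m j < t)%N -> s_var K n m j \is vbq K (nvars n) t.
Proof.
move=> h; rewrite /s_var; case: insubP => [j' _ e|_]; last exact: rpred0.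
by apply: vbqX; rewrite e.
Qed.

Definition Bm := restr_mx K n.

Lemma BmE (a b : 'I_n) : Bm a b =
  if (n.-1 <= a + b)%N then s_var K n b.+1 ((a + b).+1 - n) else 0.
Proof. by rewrite mxE. Qed.

Lemma Bm_rev (b : 'I_n) : Bm (rev_ord b) b = s_var K n b.+1 0.
Proof.
rewrite BmE /=; have := ltn_ord b; case: n b => [[]//|n'] b hb /=.
rewrite ifT; last lia. congr s_var; lia.
Qed.

Lemma Bm_zero (a b : 'I_n) : (a + b < n.-1)%N -> Bm a b = 0.
Proof. by move=> h; rewrite BmE ifF //; apply/negbTE; rewrite -ltnNge. Qed.

Definition dd (b : 'I_n) := s_var K n b.+1 0.

Lemma dd_neq0 b : dd b != 0.
Proof. by apply: s_var_neq0 => //; have := ltn_ord b; lia. Qed.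

Definition sgB : R := (-1) ^+ odd_perm (revp n)^-1.

Lemma detB : \det Bm = sgB * \prod_b dd b.
Proof.
rewrite (det_antiL (M := Bm)); last by move=> r c h; apply: Bm_zero.
congr (_ * _); rewrite (reindex_inj (@rev_ord_inj n)) /=.
by apply: eq_bigr => b _; rewrite rev_ordK Bm_rev.
Qed.

Lemma sgB_neq0 : sgB != 0.
Proof. by rewrite /sgB signr_eq0. Qed.

Lemma detB_neq0 : \det Bm != 0.
Proof.
by rewrite detB mulf_eq0 negb_or sgB_neq0 /=; apply/prodf_neq0 => b _; apply: dd_neq0.
Qed.

Local Notation adjB := (\adj Bm).

Lemma adj_sum (r b : 'I_n) :
  (forall a : 'I_n, (a < b)%N -> adjB r (rev_ord a) = 0) ->
  adjB r (rev_ord b) * dd b = \det Bm *+ (r == b).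
Proof.
move=> h; have E : (\adj Bm *m Bm) r b = \det Bm *+ (r == b) by rewrite mul_adj_mx mxE.
rewrite -E [RHS]mxE (bigD1 (rev_ord b)) //= big1 ?addr0; first by rewrite /dd Bm_rev.
move=> a ha; case: (ltnP (a + b) n.-1) => hab; first by rewrite Bm_zero ?mulr0.
have hb := ltn_ord b; have ha' := ltn_ord a.
have hne : (a : nat) <> (n - b.+1)%N by move=> e; move/eqP: ha; apply; apply/val_inj.
rewrite -[a]rev_ordK h ?mul0r //= ; lia.
Qed.

Lemma adj_zero_aux (r : 'I_n) N : forall b : 'I_n, (b < N)%N -> (b < r)%N ->
  adjB r (rev_ord b) = 0.
Proof.
elim: N => [//|N IH] b hbN hbr.
have hbN' : (b <= N)%N by [].
have := adj_sum (b := b) (r := r) (fun a ha => IH a (leq_trans ha hbN') (ltn_trans ha hbr)).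
have -> : (r == b) = false by apply/negbTE; apply/eqP => e; rewrite e ltnn in hbr.
by move/eqP; rewrite mulr0n mulf_eq0 (negbTE (dd_neq0 b)) orbF => /eqP.
Qed.

Lemma adj_zero (r b : 'I_n) : (b < r)%N -> adjB r (rev_ord b) = 0.
Proof. exact: (@adj_zero_aux r n). Qed.

Lemma adj_diag (r : 'I_n) : adjB r (rev_ord r) * dd r = \det Bm.
Proof.
by rewrite adj_sum ?eqxx ?mulr1n // => a ha; apply: adj_zero.
Qed.

Lemma adj_diagE (r : 'I_n) :
  adjB r (rev_ord r) = sgB * \prod_(b | b != r) dd b.
Proof.
apply: (mulIf (dd_neq0 r)); rewrite adj_diag detB (bigD1 r) //=.
by rewrite -[RHS]mulrA (mulrC (dd r)).
Qed.

End Spec.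

Lemma mxe_adj_zero (K : fieldType) n a b : (a < n)%N -> (b < n)%N -> (n <= a + b)%N ->
  mxe (\adj (Bm K n)) a b = 0.
Proof.
move=> ha hb hab; rewrite (mxe_nat _ ha hb) -[Ordinal hb]rev_ordK adj_zero //=.
lia.
Qed.

Lemma mxeB (K : fieldType) n a b : (a < n)%N -> (b < n)%N ->
  mxe (Bm K n) a b = if (n.-1 <= a + b)%N then s_var K n b.+1 ((a + b).+1 - n) else 0.
Proof. by move=> ha hb; rewrite (mxe_nat _ ha hb) BmE. Qed.

Lemma mxeB_anti (K : fieldType) n a b : (a < n)%N -> (b < n)%N -> (a + b = n.-1)%N ->
  mxe (Bm K n) a b = s_var K n b.+1 0.
Proof. move=> ha hb hab; rewrite mxeB // ifT; [congr s_var|]; lia. Qed.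

Lemma mxe_map (R S : nmodType) (f : {additive R -> S}) n (M : 'M[R]_n) a b :
  f (mxe M a b) = mxe (map_mx f M) a b.
Proof.
rewrite /mxe; case: (insub a : option 'I_n) => [a0|]; case: (insub b : option 'I_n) => [b0|] //=; rewrite ?raddf0 //.
by rewrite mxE.
Qed.

Section PiL.
Variables (K : fieldType) (n : nat).

Lemma map_genX : map_mx (comp_mpoly (restr_tuple K n)) (genX K n) = Bm K n.
Proof.
apply/matrixP => a b; rewrite !mxE comp_mpolyXU -tnth_nth tnth_mktuple.
by rewrite mxvecE mxE.
Qed.

Lemma piL_J k i : piL (Jpoly K n k i) = \det (\matrix_(r < k, c < k)
   if (r < k - i)%N then mxe (Bm K n) (n - k + i + r) c
   else mxe (\adj (Bm K n)) (n - k + r) c).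
Proof.
rewrite /piL /Jpoly -det_map_mx; congr (\det _); apply/matrixP => r c.
rewrite !mxE; case: ifP => _; rewrite mxe_map ?map_mx_adj map_genX //.
Qed.

End PiL.

Section Decomp.
Variables (K : fieldType) (n : nat).
Local Notation R := {mpoly K[nvars n]}.
Local Notation B := (Bm K n).

Definition Mk k i : 'M[R]_k := \matrix_(r < k, c < k)
   if (r < k - i)%N then mxe B (n - k + i + r) c
   else mxe (\adj B) (n - k + r) c.

Lemma rot_lt p i (c : 'I_(p + i)) : ((if (c < p)%N then c + i else c - p) < p + i)%N.
Proof. have := ltn_ord c; case: ifP; lia. Qed.

Definition rotf p i (c : 'I_(p + i)) : 'I_(p + i) := Ordinal (rot_lt c).

Lemma rotf_inj p i : injective (@rotf p i).
Proof.
move=> a b /(congr1 val) /=; have := ltn_ord a; have := ltn_ord b.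
case: ifP; case: ifP => h1 h2 ha hb e; apply: val_inj => /=; lia.
Qed.

Definition rotp p i : 'S_(p + i) := perm (@rotf_inj p i).

Definition Gm p i : 'M[R]_p := \matrix_(x < p, y < p) mxe B (n - p + x) (y + i).
Definition Am i : 'M[R]_i := \matrix_(x < i, y < i) mxe (\adj B) (n - i + x) y.

Lemma decomp p i : (p + i <= n)%N ->
  \det (Mk (p + i) i) = \det (Gm p i) * \det (Am i) * (-1) ^+ odd_perm (rotp p i)^-1.
Proof.
move=> hpi; rewrite (det_col_perm (rotp p i)); congr (_ * _).
set N := col_perm _ _.
have hdl : dlsubmx N = 0.
  apply/matrixP => x y; rewrite !mxE permE /=.
  have := ltn_ord x; have := ltn_ord y => hy hx.
  rewrite ifF; last lia. rewrite ifT; last lia.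
  apply: mxe_adj_zero; lia.
have hul : ulsubmx N = Gm p i.
  apply/matrixP => x y; rewrite !mxE permE /=.
  have := ltn_ord x; have := ltn_ord y => hy hx.
  rewrite ifT; last lia. rewrite ifT; last lia.
  congr mxe; lia.
have hdr : drsubmx N = Am i.
  apply/matrixP => x y; rewrite !mxE permE /=.
  have := ltn_ord x; have := ltn_ord y => hy hx.
  rewrite ifF; last lia. rewrite ifF; last lia.
  congr mxe; lia.
by rewrite -(submxK N) hdl det_ublock hul hdr.
Qed.

End Decomp.

Section Good.
Variables (K : fieldType) (n : nat).
Local Notation R := {mpoly K[nvars n]}.
Local Notation B := (Bm K n).
Local Notation vb t := (vbq K (nvars n) t).

Lemma adj_diag_good (a : 'I_n) t : (forall b : 'I_n, (sidx n b.+1 0 < t)%N) ->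
  (\adj B a (rev_ord a) != 0) && (\adj B a (rev_ord a) \is vb t).
Proof.
move=> H; rewrite adj_diagE; apply/andP; split.
  by rewrite mulf_neq0 ?sgB_neq0 //; apply/prodf_neq0 => b _; apply: dd_neq0.
by apply: rpredM; [apply: rpred_sign | apply: rpred_prod => b _; apply: s_var_vbq].
Qed.

Lemma Am_good i t : (i <= n)%N -> (forall b : 'I_n, (sidx n b.+1 0 < t)%N) ->
  (\det (Am K n i) != 0) && (\det (Am K n i) \is vb t).
Proof.
move=> hin H; rewrite det_antiU; last first.
  move=> x y hxy; rewrite mxE; apply: mxe_adj_zero; have := ltn_ord y; have := ltn_ord x; lia.
have E : forall x : 'I_i, exists a : 'I_n, Am K n i x (rev_ord x) = \adj B a (rev_ord a).
  move=> x; have hx := ltn_ord x.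
  have ha : (n - i + x < n)%N by lia.
  exists (Ordinal ha); rewrite mxE /=.
  have hb : (i - x.+1 < n)%N by lia.
  rewrite (mxe_nat _ ha hb); congr (\adj B _ _); apply: val_inj => /=; lia.
apply/andP; split.
  rewrite mulf_neq0 ?signr_eq0 //; apply/prodf_neq0 => x _.
  by have [a ->] := E x; case/andP: (adj_diag_good a H).
apply: rpredM; first exact: rpred_sign.
by apply: rpred_prod => x _; have [a ->] := E x; case/andP: (adj_diag_good a H).
Qed.

Lemma Gm_vbq p i (x y : 'I_p) : (1 <= i)%N -> (p + i <= n)%N -> (y < p.-1)%N ->
  Gm K n p i x y \is vb (sidx n (p + i) i).
Proof.
move=> hi hpn hy; have hx := ltn_ord x; rewrite mxE mxeB; try lia.
case: ifP => h; last exact: rpred0.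
apply: s_var_vbq; apply: sidx_ltA; lia.
Qed.

End Good.

Section Eval.
Variables (K : fieldType) (n i : nat).
Local Notation R := {mpoly K[nvars n]}.
Local Notation B := (Bm K n).

Definition vv (t : 'I_(nvars n)) : K :=
  ([exists m : 'I_n.+1, (i < m)%N && (val t == sidx n m i)] : bool)%:R.

Lemma meval_s_var m j : (1 <= m <= n)%N -> (j < m)%N ->
  meval vv (s_var K n m j) = (j == i)%:R.
Proof.
move=> hm hj; rewrite (@s_varE K n m j (sidx_lt hm hj)) mevalXU /vv /=.
case: (eqVneq j i) => [eji|hne]; first subst j; rewrite ?eqxx.
  case: existsP => // hn; exfalso; apply: hn.
  have hm' : (m < n.+1)%N by lia.
  by exists (Ordinal hm') => /=; rewrite eqxx andbT.
case: existsP => // -[m' /andP [hm1 /eqP e]].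
have hm2 := ltn_ord m'.
exfalso; move/eqP: hne; apply; apply: (@sidx_inj n m m' j i); try lia; exact: e.
Qed.

Lemma H_neq0 p' : (p'.+1 + i <= n)%N ->
  \det (row' ord0 (col' ord_max (Gm K n p'.+1 i))) != 0.
Proof.
move=> hpn; apply/eqP => h.
have := congr1 (meval vv) h; rewrite -det_map_mx meval0 det_antiU.
  move/eqP; rewrite mulf_eq0 signr_eq0 /= prodf_seq_eq0 => /hasP [x _ /=].
  rewrite !mxE lift0 lift_max /=.
  have hx := ltn_ord x.
  rewrite mxeB; try lia.
  rewrite ifT; last lia.
  rewrite meval_s_var; try lia.
  rewrite (_ : (_ == i) = true); first by rewrite mulr1n oner_eq0.
  apply/eqP; lia.
- move=> x y hxy; rewrite !mxE lift0 lift_max /=.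
  have hy := ltn_ord y; have hx := ltn_ord x; move: hx hy hxy; rewrite /= => hx hy hxy.
  rewrite mxeB; try lia.
  case: ifP => h1; last by rewrite meval0.
  rewrite meval_s_var; try lia.
  rewrite (_ : (_ == i) = false) //; apply/negbTE/eqP; lia.
Qed.

End Eval.

Section Main.
Variables (K : fieldType) (n : nat).
Local Notation R := {mpoly K[nvars n]}.
Local Notation B := (Bm K n).
Local Notation vb t := (vbq K (nvars n) t).

Lemma case_pos p' i : (1 <= i)%N -> (p'.+1 + i <= n)%N ->
  exists Phi Psi : R, [/\ Phi != 0, Phi \is vb (sidx n (p'.+1 + i) i),
    Psi \is vb (sidx n (p'.+1 + i) i) &
    \det (Mk K n (p'.+1 + i) i) = Phi * s_var K n (p'.+1 + i) i + Psi].
Proof.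
move=> hi hpn.
set t := sidx n (p'.+1 + i) i.
have Hb : forall b : 'I_n, (sidx n b.+1 0 < t)%N.
  by move=> b; apply: sidx_ltC => //; have := ltn_ord b; lia.
have hin : (i <= n)%N by lia.
have /andP [hA0 hAv] := @Am_good K n i t hin Hb.
rewrite decomp // (expand_det_col _ ord_max) big_ord_recl.
have hs : Gm K n p'.+1 i ord0 ord_max = s_var K n (p'.+1 + i) i.
  rewrite mxE mxeB /=; try lia.
  rewrite ifT; last lia. congr s_var; lia.
rewrite hs.
set e := (-1) ^+ _.
set c0 := cofactor _ _ _.
set S := \sum_(r < p') _.
exists (c0 * (\det (Am K n i) * e)), (S * (\det (Am K n i) * e)); split.
- apply: mulf_neq0; last by apply: mulf_neq0 => //; rewrite signr_eq0.
  by rewrite /c0 /cofactor; apply: mulf_neq0; rewrite ?signr_eq0 // H_neq0.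
- apply: rpredM; last by apply: rpredM => //; apply: rpred_sign.
  apply: rpredM; first exact: rpred_sign.
  apply: vbq_det => x y; rewrite 2!mxE.
  apply: Gm_vbq => //; rewrite lift_max; exact: ltn_ord.
- apply: rpredM; last by apply: rpredM => //; apply: rpred_sign.
  apply: rpred_sum => r _; apply: rpredM.
    have hr := ltn_ord r; rewrite mxE lift0 mxeB /=; try lia.
    case: ifP => _; last exact: rpred0.
    apply: s_var_vbq; apply: sidx_lt_gen; lia.
  apply: rpredM; first exact: rpred_sign.
  apply: vbq_det => x y; rewrite 2!mxE.
  apply: Gm_vbq => //; rewrite lift_max; exact: ltn_ord.
- ring.
Qed.

Lemma case_zero p' : (p'.+1 <= n)%N ->
  exists Phi Psi : R, [/\ Phi != 0, Phi \is vb (sidx n (p'.+1 + 0) 0),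
    Psi \is vb (sidx n (p'.+1 + 0) 0) &
    \det (Mk K n (p'.+1 + 0) 0) = Phi * s_var K n (p'.+1 + 0) 0 + Psi].
Proof.
move=> hpn.
rewrite decomp; last lia.
rewrite det_mx00 (det_antiL (M := Gm K n p'.+1 0)); last first.
  move=> x y hxy; rewrite mxE mxeB; try (have := ltn_ord x; have := ltn_ord y; lia).
  rewrite ifF //; move: hxy; rewrite /=; lia.
rewrite big_ord_recl.
have hs : Gm K n p'.+1 0 ord0 (rev_ord ord0) = s_var K n (p'.+1 + 0) 0.
  rewrite mxE mxeB_anti /=; try lia. congr s_var; lia.
rewrite hs.
set e := (-1) ^+ odd_perm (rotp _ _)^-1.
set e' := (-1) ^+ _.
set P := \prod_(r < p') _.
have hP : forall x : 'I_p', Gm K n p'.+1 0 (lift ord0 x) (rev_ord (lift ord0 x)) = s_var K n (p' - x) 0.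
  move=> x; have hx := ltn_ord x; rewrite mxE mxeB_anti /= /bump ?leq0n ?add1n; try lia.
  congr s_var; lia.
exists (e' * P * (1 * e)), 0; split.
- apply: mulf_neq0; last by rewrite mul1r signr_eq0.
  apply: mulf_neq0; first by rewrite signr_eq0.
  apply/prodf_neq0 => x _; rewrite hP; apply: s_var_neq0; have := ltn_ord x; lia.
- apply: rpredM; last by rewrite mul1r; apply: rpred_sign.
  apply: rpredM; first exact: rpred_sign.
  apply: rpred_prod => x _; rewrite hP; apply: s_var_vbq; rewrite !sidx0.
  have := ltn_ord x; lia.
- exact: rpred0.
- ring.
Qed.

End Main.

Unset Implicit Arguments.

Theorem proposition2 (K : fieldType) (n : nat) :
  [pchar K] =i pred0 -> (0 < n)%N ->
  forall k i : nat, (1 <= k <= n)%N -> (i <= k.-1)%N ->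
  exists phi psi : {fraction {mpoly K[nvars n]}},
    [/\ phi != 0, rat_below (sidx n k i) phi, rat_below (sidx n k i) psi &
        (piL (Jpoly K n k i))%:F = phi * (s_var K n k i)%:F + psi].
Proof.
move=> _ hn k i hk hi.
have [Phi [Psi [h0 h1 h2 h3]]] : exists Phi Psi : {mpoly K[nvars n]},
    [/\ Phi != 0, Phi \is vbq K (nvars n) (sidx n k i),
        Psi \is vbq K (nvars n) (sidx n k i) &
        piL (Jpoly K n k i) = Phi * s_var K n k i + Psi].
  rewrite piL_J -/(Mk K n k i).
  have [p' ek] : exists p', k = (p'.+1 + i)%N by exists (k - i - 1)%N; lia.
  subst k; case: i hk hi => [|i] hk hi.
    by apply: case_zero; lia.
  by apply: case_pos; lia.
have hq : vars_below (sidx n k i) (1 : {mpoly K[nvars n]}).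
  by apply: vbq_vars; apply: rpred1.
exists Phi%:F, Psi%:F; split.
- by rewrite tofrac_eq0.
- exists Phi, 1; split => //; [exact: vbq_vars | exact: oner_neq0 |].
  by rewrite rmorph1 divr1.
- exists Psi, 1; split => //; [exact: vbq_vars | exact: oner_neq0 |].
  by rewrite rmorph1 divr1.
- by rewrite h3 rmorphD rmorphM.
Qed.
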